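(* Let $X=(\vec x_i)_{i\ge1}$ be the infinite sequence in $[0,1]^2$ defined as follows: for each integer $\ell\ge2$ let $n_\ell:=\ell\lceil\ln^2\ell\rceil+1$ and $\theta_\ell:=\frac{\pi}{2(n_\ell-1)}$; for $0\le j\le n_\ell-1$ let $\vec x_{\ell,j}:=(\cos(j\theta_\ell),\sin(j\theta_\ell))$ if $\ell$ is even and $\vec x_{\ell,j}:=(\sin(j\theta_\ell),\cos(j\theta_\ell))$ if $\ell$ is odd; the sequence lists all $\vec x_{\ell,j}$ lexicographically in $(\ell,j)$. Then \[\sup_{(c_i)_{i\ge1}\,:\,c_i\in[0,\sqrt2]}\ \sum_{i\ge1} c_i\,\vec x_i\cdot(\vec x_i-\vec x_{i+1}) \;=\;\sqrt2\sum_{i\ge1}\bigl(1-\vec x_i\cdot\vec x_{i+1}\bigr)\;\le\;6.\] *)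

(* Defs.v *)
From HB Require Import structures.
From mathcomp Require Import all_boot all_order all_algebra.
From mathcomp Require Import all_classical all_reals all_analysis.
Set Implicit Arguments. Unset Strict Implicit. Unset Printing Implicit Defensive.
Import Order.TTheory GRing.Theory Num.Theory.
Local Open Scope ring_scope.

Section Defs.
Variable R : realType.

Definition nl (l : nat) : nat :=
  (l * `|Num.ceil (ln (l%:R : R) ^+ 2)|%N).+1.

Definition thetal (l : nat) : R := pi / (2 * ((nl l).-1)%:R).

Definition xlj (l j : nat) : R * R :=
  if odd l then (sin (j%:R * thetal l), cos (j%:R * thetal l))
  else (cos (j%:R * thetal l), sin (j%:R * thetal l)).

(* Given a 0-based position k within the concatenation of the blocks
   l, l+1, l+2, ..., return (block index, index j inside the block).
   Each block is nonempty (n_l >= 1) so fuel k.+1 always suffices. *)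
Fixpoint locate (fuel l k : nat) : nat * nat :=
  match fuel with
  | 0 => (l, k)
  | fuel'.+1 => if (k < nl l)%N then (l, k) else locate fuel' l.+1 (k - nl l)%N
  end.

(* The sequence X, indexed from i = 1: x_1 = x_{2,0}, x_2 = x_{2,1}, ...
   listing the x_{l,j} lexicographically in (l, j), l >= 2, 0 <= j <= n_l - 1. *)
Definition xseq (i : nat) : R * R :=
  let p := locate i (2%N) i.-1 in xlj p.1 p.2.

Definition dot (u v : R * R) : R := u.1 * v.1 + u.2 * v.2.

End Defs.

(* Main.v *)
Require Import Defs.
From HB Require Import structures.
From mathcomp Require Import all_boot all_order all_algebra.
From mathcomp Require Import all_classical all_reals all_analysis.
From mathcomp Require Import zify ring lra.
Import Order.TTheory GRing.Theory Num.Theory.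
Local Open Scope classical_set_scope.
Local Open Scope ring_scope.

Section Aux.
Variable R : realType.
Set Implicit Arguments. Unset Strict Implicit.

Lemma nl_gt0 l : (0 < nl R l)%N. Proof. by []. Qed.
Lemma locE f l k : locate R f.+1 l k = if (k < nl R l)%N then (l, k) else locate R f l.+1 (k - nl R l).
Proof. by []. Qed.

Lemma locate_step fuel l k : (k < fuel)%N ->
  [/\ ((locate R fuel l k).2 < nl R (locate R fuel l k).1)%N, (l <= (locate R fuel l k).1)%N &
  locate R fuel.+1 l k.+1 = if ((locate R fuel l k).2.+1 < nl R (locate R fuel l k).1)%N
     then ((locate R fuel l k).1, (locate R fuel l k).2.+1) else ((locate R fuel l k).1.+1, 0%N)].
Proof.
elim: fuel l k => [//|f IH] l k kf.
rewrite (locE f.+1 l k.+1) (locE f l k).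
case: ifP => kn.
  rewrite /=; split => //; case: ifP => // kn2.
  have -> : (k.+1 - nl R l = 0)%N by apply/eqP; rewrite subn_eq0.
  by case: f {IH kf} => [|f] //; rewrite locE nl_gt0.
move/negbT: kn; rewrite -leqNgt => kn.
have kn' : (k.+1 < nl R l)%N = false by apply/negbTE; lia.
rewrite kn' subSn //.
have kf' : (k - nl R l < f)%N by have := nl_gt0 l; lia.
have [h1 h2 h3] := IH l.+1 (k - nl R l)%N kf'.
split => //; lia.
Qed.


Lemma sin_le_id (t : R) : 0 <= t -> sin t <= t.
Proof.
move=> t0.
have D (x : R) : is_derive x (1:R) (fun y : R => y - sin y) (1 - cos x).
  apply: is_deriveB.
have C : {within `[0, t], continuous (fun y : R => y - sin y)}.
  by apply: derivable_within_continuous => x _; exact: (@ex_derive _ _ _ _ _ _ _ (D x)).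
have [c _ h] := @MVT_segment R (fun y => y - sin y) (fun y => 1 - cos y) 0 t t0
  (fun x _ => D x) C.
have : 0 <= (1 - cos c) * (t - 0) by apply: mulr_ge0; [rewrite subr_ge0 cos_le1|lra].
by rewrite -h sin0; lra.
Qed.

Lemma one_sub_cos (t : R) : 0 <= t -> 1 - cos t <= t ^+ 2 / 2.
Proof.
move=> t0.
have D (x : R) : is_derive x (1:R) (fun y : R => y ^+ 2 / 2 + cos y) (x - sin x).
  apply: is_derive_eq.
  rewrite !scaler0 add0r -[_ *: (_ + _)]/(2^-1 * (x * 1 + x * 1)) mulr1.
  by congr (_ - _); field.
have C : {within `[0, t], continuous (fun y : R => y ^+ 2 / 2 + cos y)}.
  by apply: derivable_within_continuous => x _; exact: (@ex_derive _ _ _ _ _ _ _ (D x)).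
have [c /[!in_itv]/= /andP[c0 _] h] := @MVT_segment R (fun y => y ^+ 2 / 2 + cos y) (fun y => y - sin y) 0 t t0
  (fun x _ => D x) C.
have : 0 <= (c - sin c) * (t - 0) by apply: mulr_ge0; [rewrite subr_ge0 sin_le_id|lra].
by rewrite -h cos0; lra.
Qed.


Lemma ln_le_sub1 (x : R) : 0 < x -> ln x <= x - 1.
Proof.
move=> x0; have := expR_ge1Dx (ln x); rewrite lnK ?posrE //; lra.
Qed.

Lemma ln_diff (L : R) : 1 < L -> 1 / L <= ln L - ln (L - 1).
Proof.
move=> L1.
have L0 : 0 < L by lra.
have LL : L != 0 by rewrite gt_eqF.
have -> : L - 1 = L * ((L - 1) / L) by rewrite mulrC divfK.
have p : 0 < (L - 1) / L by apply: divr_gt0; rewrite ?subr_gt0.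
rewrite lnM ?posrE //.
have := ln_le_sub1 p.
have -> : (L - 1) / L - 1 = - (1 / L) by rewrite mulrBl divff // div1r; lra.
move=> h.
rewrite opprD addrA subrr add0r lerNr. exact: h.
Qed.

Lemma ln2_ge : 5 / 8 <= ln (2 : R).
Proof.
have h1 : expR (5 / 32) <= 32 / 27 :> R.
  have := expR_ge1Dx (- (5 / 32) : R).
  rewrite expRN => h.
  have e0 := expR_gt0 (5 / 32 : R).
  have ef : expR (5/32) * (expR (5/32))^-1 = 1 :> R by rewrite divff // gt_eqF.
  move: h ef e0; set e := expR _; set f := e^-1 => h ef e0.
  nra.
have h2 : expR (5 / 8) <= 2 :> R.
  have -> : (5 / 8 : R) = 4%:R * (5 / 32) by lra.
  rewrite expRM_natl.
  apply: le_trans (_ : (32 / 27) ^+ 4 <= 2); last by lra.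
  by apply: lerXn2r; rewrite ?nnegrE ?expR_ge0 //.
rewrite -ler_expR lnK ?posrE //.
Qed.

Lemma key (L a b c : R) : 0 < L -> 0 < a -> a <= b -> 1 / L <= b - a -> b ^+ 2 <= c ->
  1 / (L * c) <= 1 / a - 1 / b.
Proof.
move=> L0 a0 ab hL hc.
have b0 : 0 < b by apply: lt_le_trans ab.
have c0 : 0 < c by apply: lt_le_trans hc; rewrite exprn_gt0.
have -> : 1 / a - 1 / b = (b - a) / (a * b).
  have an : a != 0 by rewrite gt_eqF.
  have bn : b != 0 by rewrite gt_eqF.
  by field; rewrite an bn.
apply: (@le_trans _ _ ((1 / L) / (a * b))); last first.
  by rewrite ler_wpM2r // invr_ge0 ltW // mulr_gt0.
rewrite !div1r -!invfM.
rewrite lef_pV2 ?posrE ?mulr_gt0 //.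
by rewrite ler_pM2l // (le_trans _ hc) // expr2 ler_pM2r.
Qed.

Definition cl (l : nat) : nat := `|Num.ceil (ln (l%:R : R) ^+ 2)|%N.

Lemma nlE l : nl R l = (l * cl l).+1. Proof. by []. Qed.

Lemma cl_ge l : ln (l%:R : R) ^+ 2 <= (cl l)%:R.
Proof.
rewrite /cl natr_absz ger0_norm; first exact: ceil_ge.
by rewrite ceil_ge0 (lt_le_trans _ (sqr_ge0 _)) // ltrN10.
Qed.

Lemma ln_nat_gt0 l : (1 < l)%N -> 0 < ln (l%:R : R).
Proof. by move=> l1; apply: ln_gt0; rewrite ltr1n. Qed.

Lemma cl_gt0 l : (1 < l)%N -> (0 < cl l)%N.
Proof.
move=> l1; rewrite -(ltr0n R); apply: lt_le_trans (cl_ge l).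
by rewrite exprn_gt0 // ln_nat_gt0.
Qed.

Lemma thetaE l : thetal R l = pi / (2 * (l * cl l)%:R).
Proof. by []. Qed.

Definition dl l := 1 - cos (thetal R l).
Definition Tf (k : nat) : R := pi ^+ 2 / 8 / ln ((k.-1)%:R).
Definition Phi (l j : nat) : R := (((nl R l).-1 - j)%N)%:R * dl l + Tf l.+1.

Lemma dl_ge0 l : 0 <= dl l.
Proof. by rewrite /dl subr_ge0 cos_le1. Qed.

Lemma Tf_ge0 k : (2 < k)%N -> 0 <= Tf k.
Proof.
move=> k2; rewrite /Tf divr_ge0 ?divr_ge0 ?sqr_ge0 //.
by rewrite ltW // ln_nat_gt0 //; case: k k2 => // k; rewrite ltnS.
Qed.

Lemma Phi_ge0 l j : (2 <= l)%N -> 0 <= Phi l j.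
Proof.
move=> h; rewrite /Phi; apply: addr_ge0; first by apply: mulr_ge0; rewrite ?dl_ge0.
apply: Tf_ge0; lia.
Qed.

Lemma block_dl l : (1 < l)%N ->
  ((nl R l).-1)%:R * dl l <= pi ^+ 2 / 8 * (1 / (l%:R * (cl l)%:R)).
Proof.
move=> l1.
have N0 : 0 < (l * cl l)%:R :> R by rewrite ltr0n muln_gt0 cl_gt0 // ltnW.
rewrite nlE /= /dl thetaE.
apply: le_trans (_ : (l * cl l)%:R * ((pi / (2 * (l * cl l)%:R)) ^+ 2 / 2) <= _).
  apply: ler_wpM2l; first exact: ltW N0.
  apply: one_sub_cos.
  by rewrite divr_ge0 ?pi_ge0 // mulr_ge0 // ltW.
rewrite le_eqVlt; apply/orP; left; apply/eqP.
have ln0 : l%:R != 0 :> R by rewrite pnatr_eq0 -lt0n ltnW.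
have cn0 : (cl l)%:R != 0 :> R by rewrite pnatr_eq0 -lt0n cl_gt0.
rewrite natrM; field; by rewrite ln0 cn0.
Qed.

Lemma block_bound k : (2 < k)%N -> ((nl R k).-1)%:R * dl k + Tf k.+1 <= Tf k.
Proof.
move=> k2.
have k1 : (1 < k)%N by apply: ltnW.
apply: le_trans (lerD (block_dl k1) (lexx _)) _.
rewrite /Tf /=.
set a := ln ((k.-1)%:R : R); set b := ln (k%:R : R).
have a0 : 0 < a by apply: ln_nat_gt0; lia.
have ab : a <= b by rewrite /a /b ler_ln ?posrE ?ltr0n ?ler_nat; lia.
have hd : 1 / k%:R <= b - a.
  have := @ln_diff (k%:R) (ltac:(by rewrite ltr1n)).
  by rewrite /a -subn1 natrB // ltnW.
have hk := @key (k%:R) a b (cl k)%:R (ltac:(rewrite ltr0n; lia)) a0 ab hd (cl_ge k).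
have P0 : 0 <= pi ^+ 2 / 8 :> R by rewrite divr_ge0 ?sqr_ge0.
have := ler_wpM2l P0 hk.
rewrite mulrBr !div1r.
set P := pi ^+ 2 / 8; set X := P * _.
move=> h.
lra.
Qed.

Lemma dot_succ l j : dot (xlj R l j) (xlj R l j.+1) = cos (thetal R l).
Proof.
rewrite /xlj /dot.
have -> : (j.+1)%:R * thetal R l = j%:R * thetal R l + thetal R l by rewrite mulrSr mulrDl mul1r.
set u := j%:R * thetal R l; set t := thetal R l.
case: ifP => _ /=; last by rewrite -cosB opprD addrA subrr add0r cosN.
by rewrite addrC -cosB opprD addrA subrr add0r cosN.
Qed.

Lemma dot_self l j : dot (xlj R l j) (xlj R l j) = 1.
Proof.
rewrite /xlj /dot; case: ifP => _ /=; rewrite -!expr2 ?cos2Dsin2 //.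
by rewrite addrC cos2Dsin2.
Qed.

Lemma xlj_last l : (1 < l)%N -> xlj R l (nl R l).-1 = xlj R l.+1 0.
Proof.
move=> l1.
have h : (l * cl l)%:R * thetal R l = pi / 2.
  rewrite thetaE.
  have n0 : (l * cl l)%:R != 0 :> R by rewrite pnatr_eq0 -lt0n muln_gt0 cl_gt0 // ltnW.
  have c0 : (cl l)%:R != 0 :> R by rewrite pnatr_eq0 -lt0n cl_gt0.
  have ll0 : l%:R != 0 :> R by rewrite pnatr_eq0 -lt0n ltnW.
  by field; rewrite c0 ll0.
rewrite nlE /xlj /= h mul0r.
by case: (odd l) => /=; rewrite sin_pihalf cos_pihalf sin0 cos0.
Qed.

Definition aa (i : nat) : R := 1 - dot (xseq R i) (xseq R i.+1).
Definition loc k := locate R k.+1 2 k.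

Lemma loc_props k : [/\ ((loc k).2 < nl R (loc k).1)%N, (2 <= (loc k).1)%N &
  loc k.+1 = if ((loc k).2.+1 < nl R (loc k).1)%N then ((loc k).1, (loc k).2.+1)
             else ((loc k).1.+1, 0%N)].
Proof. exact: locate_step. Qed.

Lemma xseq_loc k : xseq R k.+1 = xlj R (loc k).1 (loc k).2.
Proof. by []. Qed.

Lemma dot_le1 (u v : R * R) : dot u u = 1 -> dot v v = 1 -> dot u v <= 1.
Proof.
case: u => u1 u2; case: v => v1 v2; rewrite /dot /= => hu hv.
have : 0 <= (u1 - v1) ^+ 2 + (u2 - v2) ^+ 2 by rewrite addr_ge0 ?sqr_ge0.
nra.
Qed.

Lemma xseq_self i : dot (xseq R i) (xseq R i) = 1.
Proof. by rewrite /xseq dot_self. Qed.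

Lemma aa_ge0 i : 0 <= aa i.
Proof. by rewrite /aa subr_ge0 dot_le1 // xseq_self. Qed.

Lemma tele k : aa k.+1 + Phi (loc k.+1).1 (loc k.+1).2 <= Phi (loc k).1 (loc k).2.
Proof.
have [h1 h2 h3] := loc_props k.
rewrite /aa (xseq_loc k) (xseq_loc k.+1) h3.
move: h1 h2; set l := (loc k).1; set j := (loc k).2 => h1 h2.
case: ifP => hj.
  rewrite dot_succ /Phi /=.
  have -> : ((nl R l).-1 - j = ((nl R l).-1 - j.+1).+1)%N by lia.
  rewrite mulrSr /dl; lra.
have jE : j = (nl R l).-1 by move/negbT: hj; rewrite -leqNgt => hj; lia.
rewrite jE xlj_last // dot_self /Phi /= subnn mul0r add0r subrr add0r.
rewrite subn0; exact: (block_bound (k := l.+1) ltac:(lia)).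
Qed.

Lemma partial N : \sum_(1 <= i < N.+1) aa i + Phi (loc N).1 (loc N).2 <= Phi 2 0.
Proof.
elim: N => [|N IH]; first by rewrite big_geq // add0r.
rewrite big_nat_recr //= -addrA; apply: le_trans IH.
by rewrite lerD2l tele.
Qed.

Lemma partial_le n : \sum_(1 <= i < n) aa i <= Phi 2 0.
Proof.
case: n => [|N]; first by rewrite big_geq // Phi_ge0.
have := partial N; have [_ h _] := loc_props N.
have := Phi_ge0 (loc N).2 h; lra.
Qed.

Lemma Phi20 : Num.sqrt 2 * Phi 2 0 <= 6.
Proof.
rewrite /Phi subn0.
have h1 := block_dl (l:=2) isT.
have c2 : 1 <= (cl 2)%:R :> R by rewrite ler1n cl_gt0.
have P0 : 0 <= pi ^+ 2 / 8 :> R by rewrite divr_ge0 ?sqr_ge0.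
have q : 1 / (2%:R * (cl 2)%:R) <= 1 / 2 :> R.
  rewrite !div1r lef_pV2 ?posrE ?mulr_gt0 //; last by lra.
  lra.
have hX : ((nl R 2).-1)%:R * dl 2 <= pi ^+ 2 / 8 * (1 / 2).
  by apply: le_trans h1 _; apply: ler_wpM2l.
have hY : Tf 3 <= pi ^+ 2 / 8 * (8 / 5).
  rewrite /Tf /=; apply: ler_wpM2l => //.
  have l2 := ln2_ge.
  rewrite -[8 / 5 : R]invf_div lef_pV2 ?posrE //; lra.
have pi4 : pi < 4 :> R by have := pihalf_lt2 R; lra.
have pi0 := pi_ge0 R.
have X0 : 0 <= ((nl R 2).-1)%:R * dl 2 by rewrite mulr_ge0 ?dl_ge0.
have Y0 : 0 <= Tf 3 by apply: Tf_ge0.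
have s0 : 0 <= Num.sqrt 2 :> R by apply: sqrtr_ge0.
have s2 : Num.sqrt 2 ^+ 2 = 2 :> R by rewrite sqr_sqrtr.
have s107 : Num.sqrt 2 <= 10 / 7 :> R by nra.
move: hX hY X0 Y0; set X := _ * dl 2; set Y := Tf 3 => hX hY X0 Y0.
have pp : pi ^+ 2 / 8 <= 2 :> R by nra.
have hZ : X + Y <= 21 / 5 by nra.
nra.
Qed.

Lemma dotB (u v : R * R) : dot u (u - v) = dot u u - dot u v.
Proof. by case: u => u1 u2; case: v => v1 v2; rewrite /dot /=; ring. Qed.
End Aux.

Theorem proposition5p6 (R : realType) :
  let x := @xseq R in
  let S := [set (\sum_(1 <= i <oo)
                   ((c i * dot (x i) (x i - x i.+1)%R)%:E))%E
           | c in [set c : nat -> R | forall i, (1 <= i)%N -> 0 <= c i <= Num.sqrt 2]] in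
  ereal_sup S = ((Num.sqrt 2)%:E * \sum_(1 <= i <oo) ((1 - dot (x i) (x i.+1))%:E))%E
  /\ ((Num.sqrt 2)%:E * \sum_(1 <= i <oo) ((1 - dot (x i) (x i.+1))%:E) <= 6%:E)%E.
Proof.
move=> x S.
have E c : (\sum_(1 <= i <oo) ((c i * dot (x i) (x i - x i.+1))%:E) =
    \sum_(1 <= i <oo) ((c i * aa R i)%:E))%E.
  apply: congr_lim; apply/funext => n; apply: eq_bigr => i _.
  by rewrite dotB xseq_self.
have Z : ((Num.sqrt 2)%:E * \sum_(1 <= i <oo) ((1 - dot (x i) (x i.+1))%:E) =
    \sum_(1 <= i <oo) ((Num.sqrt 2 * aa R i)%:E))%E.
  by rewrite -nneseriesZl // => i _; rewrite lee_fin aa_ge0.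
have s0 : 0 <= Num.sqrt 2 :> R by apply: sqrtr_ge0.
split.
  apply: le_anti; apply/andP; split.
    apply/ereal_supP => _ [c hc <-]; rewrite E Z.
    apply: lee_lim.
    - apply: is_cvg_ereal_nneg_natsum => n n1.
      by rewrite lee_fin mulr_ge0 ?aa_ge0 //; case/andP: (hc n n1).
    - apply: is_cvg_ereal_nneg_natsum => n n1.
      by rewrite lee_fin mulr_ge0 ?aa_ge0.
    - apply: nearW => n; rewrite big_nat_cond [X in (_ <= X)%E]big_nat_cond.
      apply: lee_sum => i /andP[/andP[i1 _] _].
      by rewrite lee_fin ler_wpM2r ?aa_ge0 //; case/andP: (hc i i1).
  apply: ereal_sup_ubound; exists (fun _ => Num.sqrt 2).
    by move=> i _; rewrite s0 lexx.
  by rewrite E Z.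
have B : (\sum_(1 <= i <oo) ((1 - dot (x i) (x i.+1))%:E) <= (Phi R 2 0)%:E)%E.
  apply: lime_le.
    by apply: is_cvg_ereal_nneg_natsum => n _; rewrite lee_fin aa_ge0.
  by apply: nearW => n; rewrite sumEFin lee_fin partial_le.
apply: le_trans (lee_wpmul2l _ B) _; first by rewrite lee_fin.
by rewrite -EFinM lee_fin Phi20.
Qed.
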